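(* Let $n\geq 3$, $a>1$, $p,q\in\mathbb{R}$, and let $f_t(x)$, $x\in[1,a]$, solve $$\dot f=u''(x)\left(\frac{f''}{1+f'^2}+(n-1)\frac{xf'-f}{x^2+f^2}\right),\qquad f_t(1)=q,\ f_t(a)=p,$$ where $f_0$ satisfies the supercritical phase assumption $(n-1)\arctan\left(\frac{f_0}{x}\right)+\arctan(f_0')>(n-2)\frac{\pi}{2}$. Then there exists a uniform constant $C$ such that $f_t'(x)>-C$ for all $x\in[1,a]$ and all $t\geq 0$ for which the flow is defined.
   Context: This is the line bundle mean curvature flow on the blowup of $\mathbb{P}^n$ at a point under Calabi symmetry, written in the Legendre coordinate $x\in[1,a]$: $u''$ is the smooth function of $x$ coming from the Calabi-symmetric K\''ahler form $\omega=i\partial\bar\partial u$ in $a[H]-[E]$ (positive on $(1,a)$, vanishing at the endpoints), and $f$ encodes a Calabi-symmetric form $\alpha_t$ in $p[H]-q[E]$ whose eigenvalues relative to $\omega$ are $f/x$ (multiplicity $n-1$) and $f'$, so its angle is $\Theta=(n-1)\arctan(f/x)+\arctan(f')$. *)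

(* Defs.v *)
From Stdlib Require Import Reals Lra List.
From Coquelicot Require Import Coquelicot.
Open Scope R_scope.

Definition dx (g : R -> R -> R) : R -> R -> R :=
  fun t x => Derive (fun y => g t y) x.
Definition dt (g : R -> R -> R) : R -> R -> R :=
  fun t x => Derive (fun s => g s x) t.

Fixpoint iterD (l : list bool) (g : R -> R -> R) : R -> R -> R :=
  match l with
  | nil => g
  | b :: l' => (if b then dx else dt) (iterD l' g)
  end.

Definition smooth_on2 (S : R -> R -> Prop) (g : R -> R -> R) : Prop :=
  forall (l : list bool) (t x : R), S t x ->
    ex_derive (fun y => iterD l g t y) x /\
    ex_derive (fun s => iterD l g s x) t /\
    continuity_2d_pt (iterD l g) t x.

Definition smooth_on1 (lo hi : R) (h : R -> R) : Prop :=
  forall (k : nat) (x : R), lo <= x <= hi -> ex_derive_n h k x.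

Definition flow_dom (T : Rbar) (a : R) (t x : R) : Prop :=
  0 <= t /\ Rbar_lt (Finite t) T /\ 1 <= x <= a.

(* Right-hand side of the line bundle MCF in Legendre coordinate;
   U plays the role of u''. *)
Definition mcf_rhs (n : nat) (U : R -> R) (f : R -> R -> R) (t x : R) : R :=
  U x * ( Derive_n (f t) 2 x / (1 + (dx f t x) ^ 2)
          + (INR n - 1) * (x * dx f t x - f t x) / (x ^ 2 + (f t x) ^ 2) ).

Definition angle (n : nat) (f : R -> R -> R) (t x : R) : R :=
  (INR n - 1) * atan (f t x / x) + atan (dx f t x).

(* Main.v *)
Require Import Defs.
From Stdlib Require Import Reals Lra List Classical.
From Coquelicot Require Import Coquelicot.
Open Scope R_scope.

Lemma der_right_min (h : R -> R) x l r : 0 < r -> is_derive h x l ->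
  (forall y, x < y < x + r -> h x <= h y) -> 0 <= l.
Proof.
  intros Hr Hd Hm. apply is_derive_Reals in Hd.
  destruct (Rle_or_lt 0 l) as [H|H]; auto. exfalso.
  destruct (Hd (-l)) as [d Hdd]; [lra|].
  set (hh := Rmin d r / 2).
  assert (Hh0 : 0 < hh) by (unfold hh; apply Rmin_case; destruct d; simpl; lra).
  assert (Hh1 : hh < d) by (unfold hh; assert (Rmin d r <= d) by apply Rmin_l; destruct d; simpl in *; lra).
  assert (Hh2 : hh < r) by (unfold hh; assert (Rmin d r <= r) by apply Rmin_r; lra).
  specialize (Hdd hh ltac:(lra) ltac:(rewrite Rabs_right; lra)).
  specialize (Hm (x + hh) ltac:(lra)).
  assert (0 <= (h (x + hh) - h x) / hh).
  { apply Rmult_le_pos; [lra| left; apply Rinv_0_lt_compat; lra]. }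
  apply Rabs_def2 in Hdd. lra.
Qed.

Lemma der_left_min (h : R -> R) x l r : 0 < r -> is_derive h x l ->
  (forall y, x - r < y < x -> h x <= h y) -> l <= 0.
Proof.
  intros Hr Hd Hm. apply is_derive_Reals in Hd.
  destruct (Rle_or_lt l 0) as [H|H]; auto. exfalso.
  destruct (Hd l) as [d Hdd]; [lra|].
  set (hh := Rmin d r / 2).
  assert (Hh0 : 0 < hh) by (unfold hh; apply Rmin_case; destruct d; simpl; lra).
  assert (Hh1 : hh < d) by (unfold hh; assert (Rmin d r <= d) by apply Rmin_l; destruct d; simpl in *; lra).
  assert (Hh2 : hh < r) by (unfold hh; assert (Rmin d r <= r) by apply Rmin_r; lra).
  specialize (Hdd (-hh) ltac:(lra) ltac:(rewrite Rabs_left; lra)).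
  specialize (Hm (x + - hh) ltac:(lra)).
  assert ((h (x + - hh) - h x) / - hh <= 0).
  { unfold Rdiv. rewrite <- Ropp_inv_permute by lra.
    assert (0 < / hh) by (apply Rinv_0_lt_compat; lra). nra. }
  apply Rabs_def2 in Hdd. lra.
Qed.

Lemma der_eq_side (g k : R -> R) x a l1 l2 : 1 < a -> 1 <= x <= a ->
  is_derive g x l1 -> is_derive k x l2 -> (forall y, 1 <= y <= a -> g y = k y) -> l1 = l2.
Proof.
  intros Ha Hx H1 H2 He.
  assert (D1 : is_derive (fun y => g y - k y) x (l1 - l2)) by (apply (is_derive_minus g k); auto).
  assert (D2 : is_derive (fun y => k y - g y) x (l2 - l1)) by (apply (is_derive_minus k g); auto).
  destruct (Rlt_or_le x a) as [Hxa|Hxa].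
  - assert (0 <= l1 - l2).
    { apply (der_right_min (fun y => g y - k y) x _ (a - x)); auto; [lra|]. intros y Hy.
      cbv beta. rewrite He, He by lra. lra. }
    assert (0 <= l2 - l1).
    { apply (der_right_min (fun y => k y - g y) x _ (a - x)); auto; [lra|]. intros y Hy. cbv beta.
      rewrite He, He by lra. lra. }
    lra.
  - assert (l1 - l2 <= 0).
    { apply (der_left_min (fun y => g y - k y) x _ (a - 1)); auto; [lra|]. intros y Hy.
      cbv beta. rewrite He, He by lra. lra. }
    assert (l2 - l1 <= 0).
    { apply (der_left_min (fun y => k y - g y) x _ (a - 1)); auto; [lra|]. intros y Hy. cbv beta.
      rewrite He, He by lra. lra. }
    lra.
Qed.

Lemma second_min (h h' : R -> R) x r l2 : 0 < r ->
  (forall y, Rabs (y - x) < r -> is_derive h y (h' y)) ->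
  is_derive h' x l2 ->
  (forall y, Rabs (y - x) < r -> h x <= h y) -> 0 <= l2.
Proof.
  intros Hr Hd Hd2 Hm.
  assert (Hx0 : Rabs (x - x) < r) by (rewrite Rminus_diag, Rabs_R0; lra).
  assert (E0 : h' x = 0).
  { assert (0 <= h' x).
    { apply (der_right_min h x _ r); auto. intros y Hy. apply Hm.
      rewrite Rabs_right; lra. }
    assert (h' x <= 0).
    { apply (der_left_min h x _ r); auto. intros y Hy. apply Hm.
      rewrite Rabs_left; lra. }
    lra. }
  destruct (Rle_or_lt 0 l2) as [H|H]; auto. exfalso.
  apply is_derive_Reals in Hd2.
  destruct (Hd2 (- l2 / 2)) as [d Hdd]; [lra|].
  set (hh := Rmin d r / 2).
  assert (Hh0 : 0 < hh) by (unfold hh; apply Rmin_case; destruct d; simpl; lra).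
  assert (Hh1 : hh < d) by (unfold hh; assert (Rmin d r <= d) by apply Rmin_l; destruct d; simpl in *; lra).
  assert (Hh2 : hh < r) by (unfold hh; assert (Rmin d r <= r) by apply Rmin_r; lra).
  destruct (MVT_cor2 h h' x (x + hh)) as [c [Hc1 Hc2]]; [lra| |].
  { intros c Hc. apply is_derive_Reals. apply Hd.
    apply Rabs_def1; lra. }
  assert (Hneg : h' c < 0).
  { specialize (Hdd (c - x) ltac:(lra) ltac:(rewrite Rabs_right; lra)).
    replace (x + (c - x)) with c in Hdd by ring. rewrite E0 in Hdd.
    apply Rabs_def2 in Hdd.
    assert (h' c / (c - x) < 0) by lra.
    destruct (Rle_or_lt 0 (h' c)) as [Hp|Hp]; auto.
    assert (0 <= h' c / (c - x)).
    { apply Rmult_le_pos; [lra| left; apply Rinv_0_lt_compat; lra]. }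
    lra. }
  assert (h x <= h (x + hh)) by (apply Hm; rewrite Rabs_right; lra).
  assert (h' c * (x + hh - x) < 0) by (apply Rmult_neg_pos; lra) .
  lra.
Qed.

Lemma cont2d_1d (g : R -> R -> R) t x : continuity_2d_pt g t x ->
  continuity_pt (fun y => g t y) x.
Proof.
  intros H. unfold continuity_pt, continue_in, limit1_in, limit_in.
  intros eps Heps. destruct (H (mkposreal eps Heps)) as [d Hd].
  exists d. split; [apply cond_pos|]. intros y [_ Hy]. simpl in *.
  unfold R_dist in *. apply Hd; auto. rewrite Rminus_diag, Rabs_R0. apply cond_pos.
Qed.

Lemma tube (psi : R -> R -> R) t0 a : 1 <= a ->
  (forall x, 1 <= x <= a -> continuity_2d_pt psi t0 x) ->
  (forall x, 1 <= x <= a -> 0 < psi t0 x) ->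
  exists d, 0 < d /\ forall s x, Rabs (s - t0) < d -> 1 <= x <= a -> 0 < psi s x.
Proof.
  intros Ha Hc Hp.
  destruct (continuity_ab_min (fun y => psi t0 y) 1 a Ha) as [mx [Hmx1 Hmx2]].
  { intros c Hc'. apply cont2d_1d. auto. }
  set (m := psi t0 mx). assert (Hm : 0 < m) by (apply Hp; auto).
  destruct (uniform_continuity_2d_1d' psi 1 a t0 Hc (mkposreal m Hm)) as [d Hd].
  exists d. split; [apply cond_pos|]. intros s x Hs Hx.
  assert (Rabs (psi s x - psi t0 x) < m).
  { apply (Hd x t0 x s); auto.
    - destruct d; simpl; lra.
    - apply Rabs_def2 in Hs. lra.
    - rewrite Rminus_diag, Rabs_R0. apply cond_pos. }
  apply Rabs_def2 in H. specialize (Hmx1 x Hx). simpl in *. fold m in Hmx1. lra.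
Qed.

Lemma maxp (psi : R -> R -> R) (T : Rbar) (a : R) : 1 < a ->
  (forall t x, flow_dom T a t x -> continuity_2d_pt psi t x) ->
  (forall x, 1 <= x <= a -> 0 < psi 0 x) ->
  (forall t x, 0 < t -> Rbar_lt t T -> 1 <= x <= a -> psi t x = 0 ->
     (forall y, 1 <= y <= a -> 0 <= psi t y) ->
     (forall s, 0 <= s < t -> 0 < psi s x) -> False) ->
  forall t x, flow_dom T a t x -> 0 < psi t x.
Proof.
  intros Ha Hc H0 Hk ts xs Hd.
  destruct (Rlt_or_le 0 (psi ts xs)) as [Hp|Hn]; auto. exfalso.
  destruct Hd as [Ht0 [HtT Hxs]].
  assert (Hts : 0 < ts).
  { destruct Ht0 as [|E]; auto. subst ts. specialize (H0 xs Hxs). lra. }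
  set (E := fun s => 0 <= s <= ts /\ forall u y, 0 <= u <= s -> 1 <= y <= a -> 0 < psi u y).
  assert (HE0 : E 0).
  { split; [lra|]. intros u y Hu Hy. replace u with 0 by lra. auto. }
  assert (Hb : bound E) by (exists ts; intros s [Hs _]; lra).
  destruct (completeness E Hb (ex_intro _ 0 HE0)) as [t1 [Hub Hlub]].
  assert (Ht1ts : t1 <= ts) by (apply Hlub; intros s [Hs _]; lra).
  assert (Ht1T : Rbar_lt t1 T).
  { eapply Rbar_le_lt_trans; [|exact HtT]. simpl. auto. }
  assert (Ht1pos : 0 <= t1) by (apply Hub; auto).
  assert (FB : forall s, 0 <= s < t1 -> forall y, 1 <= y <= a -> 0 < psi s y).
  { intros s Hs y Hy.
    destruct (classic (exists s', E s' /\ s < s')) as [[s' [[_ Hs'] Hss']]|Hno].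
    - apply Hs'; auto. lra.
    - assert (t1 <= s); [|lra]. apply Hlub. intros z Hz.
      destruct (Rle_or_lt z s); auto. exfalso. apply Hno. exists z; auto. }
  assert (Hcont : forall t y, 0 <= t <= ts -> 1 <= y <= a -> continuity_2d_pt psi t y).
  { intros t y Ht Hy. apply Hc. split; [lra|]. split; auto.
    eapply Rbar_le_lt_trans; [|exact HtT]. simpl. lra. }
  assert (Ht1p : 0 < t1).
  { destruct (tube psi 0 a ltac:(lra)) as [d [Hd Hdd]].
    - intros; apply Hcont; auto; lra.
    - auto.
    - set (s0 := Rmin (d / 2) ts).
      assert (0 < s0) by (unfold s0; apply Rmin_case; lra).
      assert (s0 <= d / 2) by apply Rmin_l.
      assert (s0 <= ts) by apply Rmin_r.
      assert (HEs0 : E s0).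
      { split; [lra|]. intros u y Hu Hy. apply Hdd; auto.
        rewrite Rminus_0_r, Rabs_right; lra. }
      specialize (Hub s0 HEs0). lra. }
  assert (FC : forall y, 1 <= y <= a -> 0 <= psi t1 y).
  { intros y Hy. destruct (Rle_or_lt 0 (psi t1 y)) as [|Hneg]; auto. exfalso.
    destruct (Hcont t1 y ltac:(lra) Hy (mkposreal (- psi t1 y) ltac:(lra))) as [d Hd].
    set (s := t1 - Rmin d t1 / 2).
    assert (0 < Rmin d t1) by (apply Rmin_case; [apply cond_pos|lra]).
    assert (Rmin d t1 <= d) by apply Rmin_l.
    assert (Rmin d t1 <= t1) by apply Rmin_r.
    specialize (Hd s y ltac:(unfold s; rewrite Rabs_left; lra)
                   ltac:(rewrite Rminus_diag, Rabs_R0; apply cond_pos)).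
    simpl in Hd. apply Rabs_def2 in Hd.
    specialize (FB s ltac:(unfold s; lra) y Hy). lra. }
  destruct (classic (exists y, 1 <= y <= a /\ psi t1 y = 0)) as [[y [Hy Hy0]]|Hno].
  - apply (Hk t1 y Ht1p Ht1T Hy Hy0 FC). intros s Hs. apply FB; auto.
  - assert (Hpos : forall y, 1 <= y <= a -> 0 < psi t1 y).
    { intros y Hy. destruct (FC y Hy) as [|Heq]; auto. exfalso; apply Hno; exists y; auto. }
    destruct (tube psi t1 a ltac:(lra)) as [d [Hd Hdd]].
    + intros; apply Hcont; auto; lra.
    + auto.
    + set (s2 := Rmin (t1 + d / 2) ts).
      assert (s2 <= t1 + d / 2) by apply Rmin_l.
      assert (s2 <= ts) by apply Rmin_r.
      assert (HEs2 : E s2).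
      { split. { split; [|lra]. unfold s2; apply Rmin_case; lra. }
        intros u y Hu Hy. destruct (Rlt_or_le u t1).
        - apply FB; auto. lra.
        - apply Hdd; auto. rewrite Rabs_right; lra. }
      destruct (Rle_or_lt ts (t1 + d / 2)) as [Hle|Hlt].
      * assert (s2 = ts) by (unfold s2; apply Rmin_right; lra).
        destruct HEs2 as [_ HH]. specialize (HH ts xs ltac:(lra) Hxs). lra.
      * assert (s2 = t1 + d / 2) by (unfold s2; apply Rmin_left; lra).
        specialize (Hub s2 HEs2). lra.
Qed.

Lemma exd_cont (g : R -> R) x : ex_derive g x -> continuity_pt g x.
Proof. intros. apply continuity_pt_filterlim.
  apply (ex_derive_continuous (K:=R_AbsRing) (V:=R_NormedModule)). auto. Qed.

Lemma exd_minus (f g : R -> R) x : ex_derive f x -> ex_derive g x -> ex_derive (fun y => f y - g y) x.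
Proof. intros. exact (ex_derive_minus f g x H H0). Qed.
Lemma Der_minus (f g : R -> R) x : ex_derive f x -> ex_derive g x -> Derive (fun y => f y - g y) x = Derive f x - Derive g x.
Proof. intros. exact (Derive_minus f g x H H0). Qed.

Lemma mvt (phi : R -> R) b c :
  (forall z, Rmin b c <= z <= Rmax b c -> ex_derive phi z) ->
  exists z, Rmin b c <= z <= Rmax b c /\ phi c - phi b = Derive phi z * (c - b).
Proof.
  intros H. apply (MVT_gen phi b c (Derive phi)).
  - intros z Hz. apply Derive_correct. apply H. lra.
  - intros z Hz. apply exd_cont. auto.
Qed.

Lemma pick_k x a rho : 1 < a -> 1 <= x <= a -> 0 < rho ->
  exists k, k <> 0 /\ Rabs k <= rho /\
    forall v, Rmin x (x + k) <= v <= Rmax x (x + k) -> 1 <= v <= a.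
Proof.
  intros Ha Hx Hr. destruct (Rlt_or_le x a) as [H|H].
  - exists (Rmin rho (a - x)).
    assert (0 < Rmin rho (a - x)) by (apply Rmin_case; lra).
    assert (Rmin rho (a - x) <= rho) by apply Rmin_l.
    assert (Rmin rho (a - x) <= a - x) by apply Rmin_r.
    split; [lra|]. split; [rewrite Rabs_right; lra|].
    rewrite Rmin_left, Rmax_right by lra. intros; lra.
  - exists (- Rmin rho (a - 1)).
    assert (0 < Rmin rho (a - 1)) by (apply Rmin_case; lra).
    assert (Rmin rho (a - 1) <= rho) by apply Rmin_l.
    assert (Rmin rho (a - 1) <= a - 1) by apply Rmin_r.
    split; [lra|]. split; [rewrite Rabs_Ropp, Rabs_right; lra|].
    rewrite Rmin_right, Rmax_left by lra. intros; lra.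
Qed.

Lemma schwarz_dom (g : R -> R -> R) t x a delta : 0 < delta -> 1 < a -> 1 <= x <= a ->
  (forall u v, Rabs (u - t) < delta -> 1 <= v <= a ->
     ex_derive (fun y => g u y) v /\ ex_derive (fun s => g s v) u /\
     ex_derive (fun s => dx g s v) u /\ ex_derive (fun y => dt g u y) v) ->
  continuity_2d_pt (dt (dx g)) t x -> continuity_2d_pt (dx (dt g)) t x ->
  dt (dx g) t x = dx (dt g) t x.
Proof.
  intros Hd Ha Hx HD C1 C2.
  set (L1 := dt (dx g) t x). set (L2 := dx (dt g) t x).
  destruct (Req_dec L1 L2) as [|Hne]; auto. exfalso.
  assert (Heps : 0 < Rabs (L1 - L2) / 2).
  { assert (0 < Rabs (L1 - L2)) by (apply Rabs_pos_lt; lra). lra. }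
  destruct (C1 (mkposreal _ Heps)) as [d1 Hd1].
  destruct (C2 (mkposreal _ Heps)) as [d2 Hd2].
  simpl in Hd1, Hd2.
  set (rho := Rmin delta (Rmin d1 d2) / 2).
  assert (Hrho : 0 < rho).
  { unfold rho. repeat apply Rmin_case; destruct d1, d2; simpl; lra. }
  assert (Hr1 : rho < delta /\ rho < d1 /\ rho < d2).
  { unfold rho. assert (Rmin delta (Rmin d1 d2) <= delta) by apply Rmin_l.
    assert (Rmin delta (Rmin d1 d2) <= Rmin d1 d2) by apply Rmin_r.
    assert (Rmin d1 d2 <= d1) by apply Rmin_l.
    assert (Rmin d1 d2 <= d2) by apply Rmin_r.
    pose proof (cond_pos d1); pose proof (cond_pos d2). lra. }
  destruct (pick_k x a rho Ha Hx Hrho) as [k [Hk0 [Hk1 Hk2]]].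
  set (h := rho).
  assert (Hkb : forall v, Rmin x (x + k) <= v <= Rmax x (x + k) -> Rabs (v - x) <= Rabs k).
  { intros v Hv. destruct (Rle_or_lt 0 k).
    - rewrite Rmin_left, Rmax_right in Hv by lra. rewrite !Rabs_right; lra.
    - rewrite Rmin_right, Rmax_left in Hv by lra. rewrite Rabs_left with k by lra.
      apply Rabs_le; lra. }
  assert (Hth : Rmin t (t + h) = t /\ Rmax t (t + h) = t + h).
  { split; [apply Rmin_left|apply Rmax_right]; unfold h; lra. }
  destruct Hth as [Hmin Hmax].
  destruct (mvt (fun u => g u (x + k) - g u x) t (t + h)) as [c [Hc Hc']].
  { intros z Hz. rewrite Hmin, Hmax in Hz. apply exd_minus.
    - apply (HD z (x + k)). rewrite Rabs_right; unfold h in *; lra.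
      apply Hk2. split; [apply Rmin_r|apply Rmax_r].
    - apply (HD z x). rewrite Rabs_right; unfold h in *; lra. auto. }
  rewrite Hmin, Hmax in Hc.
  assert (Hcd : Rabs (c - t) < delta) by (rewrite Rabs_right; unfold h in *; lra).
  rewrite Der_minus in Hc'.
  2: { apply (HD c (x + k)); auto. apply Hk2. split; [apply Rmin_r|apply Rmax_r]. }
  2: { apply (HD c x); auto. }
  destruct (mvt (fun v => dt g c v) x (x + k)) as [d [Hdd Hdd']].
  { intros z Hz. apply (HD c z); auto. }
  destruct (mvt (fun v => g (t + h) v - g t v) x (x + k)) as [d' [Hd' Hd'']].
  { intros z Hz. apply exd_minus.
    - apply (HD (t + h) z); auto. rewrite Rabs_right; unfold h in *; lra.
    - apply (HD t z); auto. rewrite Rminus_diag, Rabs_R0; lra. }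
  rewrite Der_minus in Hd''.
  2: { apply (HD (t + h) d'); auto. rewrite Rabs_right; unfold h in *; lra. }
  2: { apply (HD t d'); auto. rewrite Rminus_diag, Rabs_R0; lra. }
  destruct (mvt (fun u => dx g u d') t (t + h)) as [c' [Hc2 Hc2']].
  { intros z Hz. rewrite Hmin, Hmax in Hz. apply (HD z d'); auto.
    rewrite Rabs_right; unfold h in *; lra. }
  rewrite Hmin, Hmax in Hc2.
  assert (Hv : dx (dt g) c d = dt (dx g) c' d').
  { assert (Ek : (dx (dt g) c d * k) * h = (dt (dx g) c' d' * h) * k).
    { replace (x + k - x) with k in Hdd', Hd'' by ring.
      replace (t + h - t) with h in Hc', Hc2' by ring.
      change (dx (dt g) c d) with (Derive (fun v => dt g c v) d).
      change (dt (dx g) c' d') with (Derive (fun u => dx g u d') c').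
      rewrite <- Hdd', <- Hc2'.
      unfold dt, dx in *. change (Derive (g (t + h)) d') with (Derive (fun y => g (t + h) y) d') in Hd''. change (Derive (g t) d') with (Derive (fun y => g t y) d') in Hd''. lra. }
    assert (h <> 0) by (unfold h; lra).
    apply Rmult_eq_reg_r with (k * h); [|apply Rmult_integral_contrapositive; auto].
    lra. }
  assert (Hdx : Rabs (d - x) < d1 /\ Rabs (d - x) < d2) by (specialize (Hkb d Hdd); lra).
  assert (Hdx' : Rabs (d' - x) < d1) by (specialize (Hkb d' Hd'); lra).
  specialize (Hd1 c' d' ltac:(rewrite Rabs_right; unfold h in *; lra) Hdx').
  specialize (Hd2 c d ltac:(rewrite Rabs_right; unfold h in *; lra) ltac:(lra)).
  fold L1 in Hd1. fold L2 in Hd2. rewrite <- Hv in Hd1.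
  assert (Rabs (L1 - L2) <= Rabs (dx (dt g) c d - L1) + Rabs (dx (dt g) c d - L2)).
  { replace (L1 - L2) with (- (dx (dt g) c d - L1) + (dx (dt g) c d - L2)) by ring.
    eapply Rle_trans; [apply Rabs_triang|]. rewrite Rabs_Ropp. lra. }
  lra.
Qed.

Definition Ef (n : nat) (f : R -> R -> R) (t x : R) : R :=
  dx (dx f) t x / (1 + (dx f t x) ^ 2)
  + (INR n - 1) * (x * dx f t x - f t x) / (x ^ 2 + (f t x) ^ 2).

Lemma mcf_E n U f t x : mcf_rhs n U f t x = U x * Ef n f t x.
Proof. reflexivity. Qed.

Lemma angle_dx n f t x : 0 < x -> ex_derive (fun y => f t y) x ->
  ex_derive (fun y => dx f t y) x ->
  is_derive (fun y => angle n f t y) x (Ef n f t x).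
Proof.
  intros Hx H1 H2. unfold angle, Ef. auto_derive.
  - repeat split; auto. lra.
  - change (Derive (fun x0 : R => f t x0) x) with (dx f t x).
    change (Derive (fun x0 : R => dx f t x0) x) with (dx (dx f) t x).
    set (F := f t x). set (F1 := dx f t x). set (F2 := dx (dx f) t x).
    assert (x * x + F * F <> 0) by nra.
    assert (1 + F1 * F1 <> 0) by nra.
    field. repeat split; try lra; nra.
Qed.

Lemma angle_dt n f t x : 0 < x -> ex_derive (fun s => f s x) t ->
  ex_derive (fun s => dx f s x) t ->
  is_derive (fun s => angle n f s x) t
    ((INR n - 1) * (dt f t x / x / (1 + (f t x / x) ^ 2))
     + dt (dx f) t x / (1 + (dx f t x) ^ 2)).
Proof.
  intros Hx H1 H2. unfold angle. auto_derive.
  - repeat split; auto.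
  - change (Derive (fun x0 : R => f x0 x) t) with (dt f t x).
    change (Derive (fun x0 : R => dx f x0 x) t) with (dt (dx f) t x).
    set (F := f t x). set (F1 := dx f t x).
    assert (1 + F1 * F1 <> 0) by nra.
    assert (x * x + F * F <> 0) by nra.
    field. repeat split; try lra; nra.
Qed.

Lemma Ef_exd n f t x : 0 < x -> ex_derive (fun y => f t y) x ->
  ex_derive (fun y => dx f t y) x -> ex_derive (fun y => dx (dx f) t y) x ->
  ex_derive (fun y => Ef n f t y) x.
Proof.
  intros Hx H1 H2 H3. unfold Ef. auto_derive.
  repeat split; auto.
  - nra.
  - assert (0 < x * x) by nra. nra.
Qed.

Lemma isd_opp (g : R -> R) x l : is_derive g x l -> is_derive (fun y => - g y) x (- l).
Proof. intros H. exact (is_derive_opp g x l H). Qed.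

Lemma isd_mult (g k : R -> R) x l1 l2 : is_derive g x l1 -> is_derive k x l2 ->
  is_derive (fun y => g y * k y) x (l1 * k x + g x * l2).
Proof. intros H1 H2. exact (is_derive_mult g k x l1 l2 H1 H2 Rmult_comm). Qed.

Lemma rbar_room (t : R) (T : Rbar) : Rbar_lt t T -> exists d, 0 < d /\ forall u, u < t + d -> Rbar_lt u T.
Proof.
  destruct T as [r| |]; simpl; intros H; simpl in H.
  - exists (r - t). split; [lra|]. intros; simpl; lra.
  - exists 1. split; [lra|]. auto.
  - contradiction.
Qed.

Lemma INR_n1 (n : nat) : (3 <= n)%nat -> 2 <= INR n - 1.
Proof. intros H. apply le_INR in H. simpl in H. lra. Qed.

Lemma fbound n a p q U T f M : (3 <= n)%nat -> 1 < a ->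
  (forall x, 1 < x < a -> 0 < U x) ->
  smooth_on2 (flow_dom T a) f ->
  (forall t x, flow_dom T a t x -> dt f t x = mcf_rhs n U f t x) ->
  (forall t, 0 <= t -> Rbar_lt (Finite t) T -> f t 1 = q /\ f t a = p) ->
  0 <= M -> p <= M -> q <= M -> (forall x, 1 <= x <= a -> f 0 x <= M) ->
  forall t x, flow_dom T a t x -> f t x <= M.
Proof.
  intros Hn Ha HUp Hs Heq Hbd HM0 HMp HMq HM0x.
  assert (S0 : forall t x, flow_dom T a t x -> ex_derive (fun y => f t y) x /\
     ex_derive (fun s => f s x) t /\ continuity_2d_pt f t x)
    by (intros t x H; exact (Hs nil t x H)).
  assert (S1 : forall t x, flow_dom T a t x -> ex_derive (fun y => dx f t y) x /\
     ex_derive (fun s => dx f s x) t /\ continuity_2d_pt (dx f) t x)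
    by (intros t x H; exact (Hs (true :: nil) t x H)).
  assert (Hpos : forall eps, 0 < eps -> forall t x, flow_dom T a t x ->
            0 < M + eps * (1 + t) - f t x).
  { intros eps Heps.
    apply (maxp (fun t x => M + eps * (1 + t) - f t x) T a Ha).
    - intros t x Hd.
      apply (continuity_2d_pt_minus (fun u v => M + eps * (1 + u)) f).
      + apply (continuity_2d_pt_plus (fun _ _ => M) (fun u v => eps * (1 + u))).
        * apply continuity_2d_pt_const.
        * apply (continuity_2d_pt_mult (fun _ _ => eps) (fun u v => 1 + u)).
          -- apply continuity_2d_pt_const.
          -- apply (continuity_2d_pt_plus (fun _ _ => 1) (fun u v => u)).
             ++ apply continuity_2d_pt_const.
             ++ apply continuity_2d_pt_id1.
      + exact (proj2 (proj2 (S0 t x Hd))).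
    - intros x Hx. specialize (HM0x x Hx). lra.
    - intros t1 x1 Ht1 Ht1T Hx1 Hz Hmin Hleft.
      assert (Hdom : forall y, 1 <= y <= a -> flow_dom T a t1 y)
        by (intros y Hy; split; [lra|split; auto]).
      assert (HF : f t1 x1 = M + eps * (1 + t1)) by lra.
      assert (HFM : M < f t1 x1) by (assert (0 < eps * (1 + t1)) by (apply Rmult_lt_0_compat; lra); lra).
      destruct (Hbd t1 ltac:(lra) Ht1T) as [Hq Hp].
      assert (Hx1' : 1 < x1 < a).
      { split; destruct Hx1 as [[H1|H1] [H2|H2]]; try lra; subst x1; lra. }
      set (r := Rmin (x1 - 1) (a - x1)).
      assert (Hr : 0 < r) by (unfold r; apply Rmin_case; lra).
      assert (Hr1 : r <= x1 - 1) by apply Rmin_l.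
      assert (Hr2 : r <= a - x1) by apply Rmin_r.
      assert (Hin : forall y, Rabs (y - x1) < r -> 1 <= y <= a).
      { intros y Hy. apply Rabs_def2 in Hy. lra. }
      assert (Hmx : forall y, Rabs (y - x1) < r -> - f t1 x1 <= - f t1 y).
      { intros y Hy. specialize (Hmin y (Hin y Hy)). lra. }
      assert (D1 : forall y, Rabs (y - x1) < r ->
                is_derive (fun z => - f t1 z) y (- dx f t1 y)).
      { intros y Hy. apply isd_opp. apply Derive_correct. exact (proj1 (S0 t1 y (Hdom y (Hin y Hy)))). }
      assert (D2 : is_derive (fun z => - dx f t1 z) x1 (- dx (dx f) t1 x1)).
      { apply isd_opp. apply Derive_correct. exact (proj1 (S1 t1 x1 (Hdom x1 Hx1))). }
      assert (Hx0 : Rabs (x1 - x1) < r) by (rewrite Rminus_diag, Rabs_R0; lra).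
      assert (HF2 : 0 <= - dx (dx f) t1 x1).
      { apply (second_min (fun z => - f t1 z) (fun z => - dx f t1 z) x1 r); auto. }
      assert (HF1 : dx f t1 x1 = 0).
      { assert (0 <= - dx f t1 x1).
        { apply (der_right_min (fun z => - f t1 z) x1 _ r); auto.
          intros y Hy. apply Hmx. rewrite Rabs_right; lra. }
        assert (- dx f t1 x1 <= 0).
        { apply (der_left_min (fun z => - f t1 z) x1 _ r); auto.
          intros y Hy. apply Hmx. rewrite Rabs_left; lra. }
        lra. }
      assert (Hdt : dt f t1 x1 < 0).
      { rewrite Heq by auto. rewrite mcf_E. unfold Ef. rewrite HF1.
        pose proof (INR_n1 n Hn) as Hn1. pose proof (HUp x1 Hx1') as HU.
        set (F := f t1 x1) in *. set (F2 := dx (dx f) t1 x1) in *.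
        assert (HF0 : 0 < F) by lra.
        assert (Hden : 0 < x1 ^ 2 + F ^ 2) by (assert (0 < F ^ 2) by (apply pow_lt; lra); assert (0 <= x1 ^ 2) by apply pow2_ge_0; lra).
        assert (T1 : F2 / (1 + 0 ^ 2) <= 0).
        { replace (1 + 0 ^ 2) with 1 by ring. lra. }
        assert (T2 : (INR n - 1) * (x1 * 0 - F) / (x1 ^ 2 + F ^ 2) < 0).
        { unfold Rdiv. apply Rmult_neg_pos; [apply Rmult_pos_neg; lra|]. apply Rinv_0_lt_compat; lra. }
        apply Rmult_pos_neg; lra. }
      assert (Dt : is_derive (fun s => M + eps * (1 + s) - f s x1) t1 (eps - dt f t1 x1)).
      { assert (Ex : ex_derive (fun s => f s x1) t1) by exact (proj1 (proj2 (S0 t1 x1 (Hdom x1 Hx1)))).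
        auto_derive; auto. unfold dt. ring. }
      assert (eps - dt f t1 x1 <= 0).
      { apply (der_left_min _ t1 _ t1 Ht1 Dt). intros s Hs0.
        specialize (Hleft s ltac:(lra)). lra. }
      lra. }
  intros t x Hd. destruct (Rle_or_lt (f t x) M) as [|Hgt]; auto. exfalso.
  assert (Ht : 0 <= t) by (destruct Hd; lra).
  set (eps := (f t x - M) / (2 * (1 + t))).
  assert (Heps : 0 < eps) by (unfold eps; apply Rdiv_lt_0_compat; lra).
  specialize (Hpos eps Heps t x Hd).
  assert (eps * (1 + t) = (f t x - M) / 2) by (unfold eps; field; lra).
  lra.
Qed.

Lemma thbound n a U T f : (3 <= n)%nat -> 1 < a ->
  smooth_on1 1 a U ->
  (forall x, 1 < x < a -> 0 < U x) -> U 1 = 0 -> U a = 0 ->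
  smooth_on2 (flow_dom T a) f ->
  (forall t x, flow_dom T a t x -> dt f t x = mcf_rhs n U f t x) ->
  (forall x, 1 <= x <= a -> angle n f 0 x > (INR n - 2) * (PI / 2)) ->
  forall t x, flow_dom T a t x -> (INR n - 2) * (PI / 2) <= angle n f t x.
Proof.
  intros Hn Ha HU HUp HU1 HUa Hs Heq Hph.
  set (c0 := (INR n - 2) * (PI / 2)).
  assert (S0 : forall t x, flow_dom T a t x -> ex_derive (fun y => f t y) x /\
     ex_derive (fun s => f s x) t /\ continuity_2d_pt f t x)
    by (intros t x H; exact (Hs nil t x H)).
  assert (S1 : forall t x, flow_dom T a t x -> ex_derive (fun y => dx f t y) x /\
     ex_derive (fun s => dx f s x) t /\ continuity_2d_pt (dx f) t x)
    by (intros t x H; exact (Hs (true :: nil) t x H)).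
  assert (S2 : forall t x, flow_dom T a t x -> ex_derive (fun y => dx (dx f) t y) x)
    by (intros t x H; exact (proj1 (Hs (true :: true :: nil) t x H))).
  assert (S3 : forall t x, flow_dom T a t x -> ex_derive (fun y => dt f t y) x)
    by (intros t x H; exact (proj1 (Hs (false :: nil) t x H))).
  assert (S4 : forall t x, flow_dom T a t x -> continuity_2d_pt (dt (dx f)) t x)
    by (intros t x H; exact (proj2 (proj2 (Hs (false :: true :: nil) t x H)))).
  assert (S5 : forall t x, flow_dom T a t x -> continuity_2d_pt (dx (dt f)) t x)
    by (intros t x H; exact (proj2 (proj2 (Hs (true :: false :: nil) t x H)))).
  assert (HUd : forall x, 1 <= x <= a -> ex_derive U x)
    by (intros x Hx; exact (HU 1%nat x Hx)).
  assert (Sch : forall t x, 0 < t -> Rbar_lt t T -> 1 <= x <= a ->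
            dt (dx f) t x = dx (dt f) t x).
  { intros t x Ht HtT Hx.
    destruct (rbar_room t T HtT) as [d [Hd Hdd]].
    assert (Hdel : 0 < Rmin t d) by (apply Rmin_case; lra).
    assert (Hd1 : Rmin t d <= t) by apply Rmin_l.
    assert (Hd2 : Rmin t d <= d) by apply Rmin_r.
    assert (Hdm : flow_dom T a t x) by (split; [lra|split; auto]).
    apply (schwarz_dom f t x a (Rmin t d) Hdel Ha Hx); [| apply S4; auto | apply S5; auto].
    intros u v Hu Hv. apply Rabs_def2 in Hu.
    assert (Hdu : flow_dom T a u v) by (split; [lra|split; [apply Hdd; lra|auto]]).
    destruct (S0 u v Hdu) as [A1 [A2 _]]. destruct (S1 u v Hdu) as [B1 [B2 _]].
    repeat split; auto. }
  assert (Hpos : forall eps, 0 < eps -> forall t x, flow_dom T a t x ->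
            0 < angle n f t x - c0 + eps * t).
  { intros eps Heps.
    apply (maxp (fun t x => angle n f t x - c0 + eps * t) T a Ha).
    - intros t x Hd. unfold angle.
      assert (Hx0 : x <> 0) by (destruct Hd as [_ [_ Hx]]; lra).
      apply (continuity_2d_pt_plus (fun u v => (INR n - 1) * atan (f u v / v) + atan (dx f u v) - c0) (fun u v => eps * u)).
      + apply (continuity_2d_pt_minus (fun u v => (INR n - 1) * atan (f u v / v) + atan (dx f u v)) (fun _ _ => c0)); [|apply continuity_2d_pt_const].
        apply (continuity_2d_pt_plus (fun u v => (INR n - 1) * atan (f u v / v)) (fun u v => atan (dx f u v))).
        * apply (continuity_2d_pt_mult (fun _ _ => INR n - 1) (fun u v => atan (f u v / v))); [apply continuity_2d_pt_const|].
          apply (continuity_1d_2d_pt_comp atan (fun u v => f u v / v)).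
          -- apply derivable_continuous_pt. apply derivable_pt_atan.
          -- apply (continuity_2d_pt_mult f (fun u v => / v)).
             ++ exact (proj2 (proj2 (S0 t x Hd))).
             ++ apply (continuity_2d_pt_inv (fun u v => v)); auto. apply continuity_2d_pt_id2.
        * apply (continuity_1d_2d_pt_comp atan (dx f)).
          -- apply derivable_continuous_pt. apply derivable_pt_atan.
          -- exact (proj2 (proj2 (S1 t x Hd))).
      + apply (continuity_2d_pt_mult (fun _ _ => eps) (fun u v => u)).
        * apply continuity_2d_pt_const.
        * apply continuity_2d_pt_id1.
    - intros x Hx. specialize (Hph x Hx). fold c0 in Hph. lra.
    - intros t1 x1 Ht1 Ht1T Hx1 Hz Hmin Hleft.
      assert (Hdom : forall y, 1 <= y <= a -> flow_dom T a t1 y)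
        by (intros y Hy; split; [lra|split; auto]).
      assert (Hmn : forall y, 1 <= y <= a -> angle n f t1 x1 <= angle n f t1 y).
      { intros y Hy. specialize (Hmin y Hy). lra. }
      assert (DA : forall y, 1 <= y <= a -> is_derive (fun z => angle n f t1 z) y (Ef n f t1 y)).
      { intros y Hy. apply angle_dx; [lra| exact (proj1 (S0 t1 y (Hdom y Hy)))
                                           | exact (proj1 (S1 t1 y (Hdom y Hy)))]. }
      set (E0 := Ef n f t1 x1).
      set (E' := Derive (fun y => Ef n f t1 y) x1).
      set (U' := Derive U x1).
      assert (DE : is_derive (fun y => Ef n f t1 y) x1 E').
      { apply Derive_correct. apply Ef_exd; [lra| exact (proj1 (S0 t1 x1 (Hdom x1 Hx1)))
            | exact (proj1 (S1 t1 x1 (Hdom x1 Hx1))) | exact (S2 t1 x1 (Hdom x1 Hx1))]. }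
      assert (DU : is_derive U x1 U') by (apply Derive_correct; auto).
      assert (K : U x1 * E0 = 0 /\ 0 <= U' * E0 + U x1 * E').
      { destruct Hx1 as [[H1|H1] [H2|H2]].
        -
          set (r := Rmin (x1 - 1) (a - x1)).
          assert (Hr : 0 < r) by (unfold r; apply Rmin_case; lra).
          assert (Hr1 : r <= x1 - 1) by apply Rmin_l.
          assert (Hr2 : r <= a - x1) by apply Rmin_r.
          assert (Hin : forall y, Rabs (y - x1) < r -> 1 <= y <= a).
          { intros y Hy. apply Rabs_def2 in Hy. lra. }
          assert (HE0 : E0 = 0).
          { assert (0 <= E0).
            { apply (der_right_min (fun z => angle n f t1 z) x1 _ r); auto.
              apply DA; lra. intros y Hy. apply Hmn. lra. }
            assert (E0 <= 0).
            { apply (der_left_min (fun z => angle n f t1 z) x1 _ r); auto.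
              apply DA; lra. intros y Hy. apply Hmn. lra. }
            lra. }
          assert (HE' : 0 <= E').
          { apply (second_min (fun z => angle n f t1 z) (fun y => Ef n f t1 y) x1 r); auto.
            }
          pose proof (HUp x1 ltac:(lra)).
          rewrite HE0. split; [ring|]. rewrite Rmult_0_r, Rplus_0_l.
          apply Rmult_le_pos; lra.
        -
          assert (HUx : U x1 = 0) by (rewrite H2; auto).
          rewrite HUx. split; [ring|]. rewrite Rmult_0_l, Rplus_0_r.
          assert (E0 <= 0).
          { apply (der_left_min (fun z => angle n f t1 z) x1 _ (a - 1)); [lra| |].
            apply DA; lra. intros y Hy. apply Hmn. lra. }
          assert (U' <= 0).
          { apply (der_left_min U x1 _ (a - 1)); [lra|auto|].
            intros y Hy. rewrite HUx. left. apply HUp. lra. }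
          replace (U' * E0) with ((- U') * (- E0)) by ring. apply Rmult_le_pos; lra.
        -
          assert (HUx : U x1 = 0) by (rewrite <- H1; auto).
          rewrite HUx. split; [ring|]. rewrite Rmult_0_l, Rplus_0_r.
          assert (0 <= E0).
          { apply (der_right_min (fun z => angle n f t1 z) x1 _ (a - 1)); [lra| |].
            apply DA; lra. intros y Hy. apply Hmn. lra. }
          assert (0 <= U').
          { apply (der_right_min U x1 _ (a - 1)); [lra|auto|].
            intros y Hy. rewrite HUx. left. apply HUp. lra. }
          apply Rmult_le_pos; lra.
        - lra. }
      destruct K as [K1 K2].
      assert (Hdtf : dt f t1 x1 = 0) by (rewrite Heq by auto; rewrite mcf_E; exact K1).
      assert (Hdtdx : dt (dx f) t1 x1 = U' * E0 + U x1 * E').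
      { rewrite Sch by auto.
        apply (der_eq_side (fun y => dt f t1 y) (fun y => U y * Ef n f t1 y) x1 a); auto.
        all: try (apply Derive_correct; apply S3; auto; fail).
        all: try (apply isd_mult; auto; fail).
        all: try (intros y Hy; rewrite Heq by auto; apply mcf_E). }
      assert (Dt : is_derive (fun s => angle n f s x1 - c0 + eps * s) t1
                    ((INR n - 1) * (dt f t1 x1 / x1 / (1 + (f t1 x1 / x1) ^ 2))
                     + dt (dx f) t1 x1 / (1 + (dx f t1 x1) ^ 2) + eps)).
      { assert (Ha1 := angle_dt n f t1 x1 ltac:(lra)
                  (proj1 (proj2 (S0 t1 x1 (Hdom x1 Hx1))))
                  (proj1 (proj2 (S1 t1 x1 (Hdom x1 Hx1))))).
        assert (Ex : ex_derive (fun s => angle n f s x1) t1) by (eexists; exact Ha1).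
        auto_derive.
        - repeat split; auto.
        - assert (Hu := is_derive_unique _ _ _ Ha1). change (Derive (fun x : R => angle n f x x1) t1) with (Derive (fun s : R_AbsRing => angle n f s x1) t1). rewrite Hu. ring. }
      assert (Hle : (INR n - 1) * (dt f t1 x1 / x1 / (1 + (f t1 x1 / x1) ^ 2))
                     + dt (dx f) t1 x1 / (1 + (dx f t1 x1) ^ 2) + eps <= 0).
      { apply (der_left_min _ t1 _ t1 Ht1 Dt). intros s Hs0.
        specialize (Hleft s ltac:(lra)). cbv beta. lra. }
      rewrite Hdtf, Hdtdx in Hle.
      assert (0 <= (U' * E0 + U x1 * E') / (1 + dx f t1 x1 ^ 2)).
      { apply Rdiv_le_0_compat; auto. assert (0 <= dx f t1 x1 ^ 2) by apply pow2_ge_0. lra. }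
      unfold Rdiv at 1 2 in Hle. rewrite !Rmult_0_l, Rmult_0_r in Hle. lra. }
  intros t x Hd. fold c0.
  destruct (Rle_or_lt c0 (angle n f t x)) as [|Hlt]; auto. exfalso.
  assert (Ht : 0 <= t) by (destruct Hd; lra).
  set (eps := (c0 - angle n f t x) / (2 * (1 + t))).
  assert (Heps : 0 < eps) by (unfold eps; apply Rdiv_lt_0_compat; lra).
  specialize (Hpos eps Heps t x Hd).
  assert (eps * (1 + t) = (c0 - angle n f t x) / 2) by (unfold eps; field; lra).
  assert (eps * t <= eps * (1 + t)) by (apply Rmult_le_compat_l; lra).
  lra.
Qed.

Theorem lemma4p4
  (n : nat) (a p q : R) (U : R -> R) (T : Rbar) (f : R -> R -> R) :
  (3 <= n)%nat ->
  1 < a ->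
  (* u'' : smooth on [1,a], positive on (1,a), vanishing at the endpoints *)
  smooth_on1 1 a U ->
  (forall x, 1 < x < a -> 0 < U x) ->
  U 1 = 0 -> U a = 0 ->
  (* the flow exists (smoothly) on [0,T), T > 0 possibly infinite *)
  Rbar_lt (Finite 0) T ->
  smooth_on2 (flow_dom T a) f ->
  (forall t x, flow_dom T a t x -> dt f t x = mcf_rhs n U f t x) ->
  (forall t, 0 <= t -> Rbar_lt (Finite t) T -> f t 1 = q /\ f t a = p) ->
  (* supercritical phase for f_0 *)
  (forall x, 1 <= x <= a -> angle n f 0 x > (INR n - 2) * (PI / 2)) ->
  exists C : R, forall t x, flow_dom T a t x -> dx f t x > - C.
Proof.
  intros Hn Ha HU HUp HU1 HUa HT Hs Heq Hbd Hph.
  assert (Hc0 : forall c, 1 <= c <= a -> continuity_pt (f 0) c).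
  { intros c Hc. apply exd_cont.
    assert (Hd : flow_dom T a 0 c) by (split; [lra|split; auto]).
    exact (proj1 (Hs nil 0 c Hd)). }
  destruct (continuity_ab_maj (f 0) 1 a ltac:(lra) Hc0) as [Mx [HMx _]].
  set (M := Rmax 0 (Rmax p (Rmax q (f 0 Mx)))).
  assert (HM0 : 0 <= M) by apply Rmax_l.
  assert (HM1 : Rmax p (Rmax q (f 0 Mx)) <= M) by apply Rmax_r.
  assert (HMp : p <= M) by (eapply Rle_trans; [apply Rmax_l|exact HM1]).
  assert (HM2 : Rmax q (f 0 Mx) <= M) by (eapply Rle_trans; [apply Rmax_r|exact HM1]).
  assert (HMq : q <= M) by (eapply Rle_trans; [apply Rmax_l|exact HM2]).
  assert (HM3 : f 0 Mx <= M) by (eapply Rle_trans; [apply Rmax_r|exact HM2]).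
  assert (HM0x : forall x, 1 <= x <= a -> f 0 x <= M).
  { intros x Hx. specialize (HMx x Hx). lra. }
  pose proof (fbound n a p q U T f M Hn Ha HUp Hs Heq Hbd HM0 HMp HMq HM0x) as FB.
  pose proof (thbound n a U T f Hn Ha HU HUp HU1 HUa Hs Heq Hph) as TB.
  pose proof (INR_n1 n Hn) as HN.
  set (N := INR n - 1) in *.
  set (AM := atan M).
  assert (HAM : AM < PI / 2) by (unfold AM; destruct (atan_bound M); lra).
  pose proof PI_RGT_0 as HPI.
  set (eta := N * (PI / 2 - AM)).
  assert (Heta : 0 < eta) by (unfold eta; apply Rmult_lt_0_compat; lra).
  set (eta' := Rmin eta (PI / 2)).
  assert (He1 : 0 < eta') by (unfold eta'; apply Rmin_case; lra).
  assert (He2 : eta' <= eta) by apply Rmin_l.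
  assert (He3 : eta' <= PI / 2) by apply Rmin_r.
  set (th0 := - (PI / 2) + eta').
  exists (1 - tan th0). intros t x Hd.
  assert (Hx : 1 <= x <= a) by (destruct Hd as [_ [_ Hx]]; exact Hx).
  specialize (FB t x Hd). specialize (TB t x Hd).
  assert (Hfx : f t x / x <= M).
  { destruct (Rle_or_lt 0 (f t x)) as [H0|H0].
    - assert (f t x / x <= f t x).
      { unfold Rdiv. rewrite <- (Rmult_1_r (f t x)) at 2.
        apply Rmult_le_compat_l; auto.
        rewrite <- Rinv_1. apply Rinv_le_contravar; lra. }
      lra.
    - assert (f t x / x < 0).
      { unfold Rdiv. apply Rmult_neg_pos; auto. apply Rinv_0_lt_compat; lra. }
      lra. }
  assert (Hat : atan (f t x / x) <= AM).
  { unfold AM. destruct Hfx as [Hl|He]; [left; apply atan_increasing; auto|rewrite He; lra]. }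
  unfold angle in TB. fold N in TB.
  assert (N * atan (f t x / x) <= N * AM) by (apply Rmult_le_compat_l; lra).
  assert (Hcc : (INR n - 2) * (PI / 2) = (N - 1) * (PI / 2)) by (unfold N; ring).
  assert (Hdf : th0 <= atan (dx f t x)).
  { unfold th0. unfold eta in He2. nra. }
  destruct (Rle_or_lt (tan th0) (dx f t x)) as [Hge|Hlt]; [lra|].
  exfalso. apply atan_increasing in Hlt.
  rewrite atan_tan in Hlt by (unfold th0; lra). lra.
Qed.
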